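(* Let $v\in C_q(\mathcal D,\widetilde M)$ satisfy $2v_t=\mathrm{i}(v_{xx}-2vv^*v)$ on $\mathcal D$. Then for every $r\ge0$ the mixed derivatives satisfy $\big(\partial_x^k v\big)_{xt}=\big(\partial_x^k v\big)_{tx}$ for $0\le k\le r$ on a square $\{0\le x,t\le\varepsilon\}$ (some $\varepsilon>0$), and all functions $\big(\partial_x^k v\big)(0,t)$ (for $t$ in a neighbourhood $[0,\varepsilon]$ of $0$) and in particular all the numbers $\big(\partial_x^k v\big)(0,0)$, $k\ge0$, are uniquely determined by the boundary values $v(0,t)$ and $v_x(0,t)$, $0\le t<a$. Consequently $v(x,0)$, $x\ge0$, is uniquely determined by $v(0,\cdot)$ and $v_x(0,\cdot)$.
   Context: $\mathcal D=\{(x,t):0\le x<\infty,\ 0\le t<a\}$, $0<a\le\infty$. For constants $\widetilde M_k>0$, $C(\{\widetilde M_k\})$ is the class of infinitely differentiable functions $f$ on $[0,\infty)$ with $|f^{(k)}(x)|\le a(f)^{k+1}\widetilde M_k$ for all $x\ge0$, $k\ge0$, for some $a(f)\ge0$; it is quasi-analytic if, for its elements, vanishing of all derivatives at one point $x\ge0$ forces $f\equiv0$. $C_q(\mathcal D,\widetilde M)$, $\widetilde M=\{\widetilde M_k(i,j)\}$, is the class of $m_1\times m_2$ matrix functions $v$ that are continuously differentiable on $\mathcal D$, have $v_{xx}$ existing, satisfy $\sup_{x>0,\,0\le s\le t}\|v(x,s)\|<\infty$ for each $t<a$, whose entries $v_{ij}(x,0)$ lie in quasi-analytic classes $C(\{\widetilde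 M_k(i,j)\}_k)$, and such that for each $k$ there is $\varepsilon_k>0$ with $v$ $k$ times continuously differentiable in $x$ on $\{0\le x\le\varepsilon_k,\ 0\le t\le\varepsilon_k\}\subset\mathcal D$. Boundary derivatives are one-sided. *)

(* Defs.v *)
From Stdlib Require Import Reals.
Open Scope R_scope.

Definition C : Type := (R * R)%type.
Definition C0 : C := (0, 0).
Definition Cadd (z w : C) : C := (fst z + fst w, snd z + snd w).
Definition Copp (z : C) : C := (- fst z, - snd z).
Definition Cmul (z w : C) : C :=
  (fst z * fst w - snd z * snd w, fst z * snd w + snd z * fst w).
Definition Cconj (z : C) : C := (fst z, - snd z).
Definition CRscal (r : R) (z : C) : C := (r * fst z, r * snd z).
Definition Ci : C := (0, 1).
Definition Cmod (z : C) : R := sqrt (fst z ^ 2 + snd z ^ 2).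
Fixpoint Csum (n : nat) (f : nat -> C) : C :=
  match n with O => C0 | S n => Cadd (Csum n f) (f n) end.

(** * Derivatives within a set (one-sided at boundary points) *)
Definition is_deriv_in (S : R -> Prop) (g : R -> R) (x l : R) : Prop :=
  forall eps, 0 < eps -> exists delta, 0 < delta /\
    forall h, h <> 0 -> Rabs h < delta -> S (x + h) ->
      Rabs ((g (x + h) - g x) / h - l) < eps.

Definition is_Cderiv_in (S : R -> Prop) (f : R -> C) (x : R) (l : C) : Prop :=
  is_deriv_in S (fun y => fst (f y)) x (fst l) /\
  is_deriv_in S (fun y => snd (f y)) x (snd l).

(** * Matrix functions: v x t i j is the (i,j) entry at (x,t) *)
Definition Mat : Type := nat -> nat -> C.
Definition Mfun : Type := R -> R -> Mat.

Definition Meq (m1 m2 : nat) (A B : Mat) : Prop :=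
  forall i j, (i < m1)%nat -> (j < m2)%nat -> A i j = B i j.

Definition pdx_in (m1 m2 : nat) (Om : R -> R -> Prop) (u ux : Mfun) : Prop :=
  forall x t i j, Om x t -> (i < m1)%nat -> (j < m2)%nat ->
    is_Cderiv_in (fun y => Om y t) (fun y => u y t i j) x (ux x t i j).

Definition pdt_in (m1 m2 : nat) (Om : R -> R -> Prop) (u ut : Mfun) : Prop :=
  forall x t i j, Om x t -> (i < m1)%nat -> (j < m2)%nat ->
    is_Cderiv_in (fun s => Om x s) (fun s => u x s i j) t (ut x t i j).

Definition cont_in (m1 m2 : nat) (Om : R -> R -> Prop) (u : Mfun) : Prop :=
  forall x t i j, Om x t -> (i < m1)%nat -> (j < m2)%nat ->
    forall eps, 0 < eps -> exists delta, 0 < delta /\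
      forall y s, Om y s -> Rabs (y - x) < delta -> Rabs (s - t) < delta ->
        Cmod (Cadd (u y s i j) (Copp (u x t i j))) < eps.

(** * The domain D = [0,oo) x [0,a), 0 < a <= oo; a = None encodes a = oo *)
Definition below_a (a : option R) (t : R) : Prop :=
  match a with Some a0 => t < a0 | None => True end.
Definition a_pos (a : option R) : Prop :=
  match a with Some a0 => 0 < a0 | None => True end.
Definition Dom (a : option R) (x t : R) : Prop :=
  0 <= x /\ 0 <= t /\ below_a a t.
Definition Sq (eps x t : R) : Prop := 0 <= x <= eps /\ 0 <= t <= eps.

Definition xderiv_family (m1 m2 : nat) (Om : R -> R -> Prop) (v : Mfun)
    (n : nat) (F : nat -> Mfun) : Prop :=
  (forall x t, Om x t -> Meq m1 m2 (F 0%nat x t) (v x t)) /\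
  (forall k, (k < n)%nat -> pdx_in m1 m2 Om (F k) (F (S k))) /\
  (forall k, (k <= n)%nat -> cont_in m1 m2 Om (F k)).

Definition nonneg (x : R) : Prop := 0 <= x.

Definition deriv_family1 (f : R -> C) (F : nat -> R -> C) : Prop :=
  (forall x, 0 <= x -> F 0%nat x = f x) /\
  (forall k x, 0 <= x -> is_Cderiv_in nonneg (F k) x (F (S k) x)).

Definition in_classC (Mk : nat -> R) (f : R -> C) : Prop :=
  exists F, deriv_family1 f F /\
    exists A, 0 <= A /\ forall k x, 0 <= x -> Cmod (F k x) <= A ^ (S k) * Mk k.

Definition quasi_analytic (Mk : nat -> R) : Prop :=
  forall f, in_classC Mk f -> forall F, deriv_family1 f F ->
    forall x0, 0 <= x0 -> (forall k, F k x0 = C0) ->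
    forall x, 0 <= x -> f x = C0.

(** * The class C_q(D, M~), M i j k = M~_k(i,j) *)
Definition Cq (m1 m2 : nat) (a : option R) (M : nat -> nat -> nat -> R)
    (v : Mfun) : Prop :=
  (exists vx vt, pdx_in m1 m2 (Dom a) v vx /\ pdt_in m1 m2 (Dom a) v vt /\
     cont_in m1 m2 (Dom a) v /\ cont_in m1 m2 (Dom a) vx /\
     cont_in m1 m2 (Dom a) vt) /\
  (exists vx vxx, pdx_in m1 m2 (Dom a) v vx /\ pdx_in m1 m2 (Dom a) vx vxx) /\
  (forall t, 0 <= t -> below_a a t -> exists B, forall x s i j,
     0 < x -> 0 <= s <= t -> (i < m1)%nat -> (j < m2)%nat ->
     Cmod (v x s i j) <= B) /\
  (forall i j, (i < m1)%nat -> (j < m2)%nat ->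
     in_classC (M i j) (fun x => v x 0 i j) /\ quasi_analytic (M i j)) /\
  (forall k, exists eps, 0 < eps /\ below_a a eps /\
     exists F, xderiv_family m1 m2 (Sq eps) v k F).

Definition cubic (m1 m2 : nat) (A : Mat) : Mat := fun i j =>
  Csum m1 (fun q => Cmul (Csum m2 (fun p => Cmul (A i p) (Cconj (A q p)))) (A q j)).

Definition nls (m1 m2 : nat) (a : option R) (v : Mfun) : Prop :=
  exists vx vt vxx,
    pdx_in m1 m2 (Dom a) v vx /\ pdt_in m1 m2 (Dom a) v vt /\
    pdx_in m1 m2 (Dom a) vx vxx /\
    forall x t i j, Dom a x t -> (i < m1)%nat -> (j < m2)%nat ->
      CRscal 2 (vt x t i j) =
      Cmul Ci (Cadd (vxx x t i j) (Copp (CRscal 2 (cubic m1 m2 (v x t) i j)))).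

(** (d_x^k v)_{xt} = (d_x^k v)_{tx} on Om for k <= r *)
Definition mixed_commute (m1 m2 : nat) (Om : R -> R -> Prop)
    (F : nat -> Mfun) (r : nat) : Prop :=
  forall k, (k <= r)%nat -> exists T Y,
    pdt_in m1 m2 Om (F k) T /\ pdx_in m1 m2 Om T Y /\
    pdt_in m1 m2 Om (F (S k)) Y.

(* Main.v *)
Require Import Defs.
From Stdlib Require Import Reals Lra Lia Psatz ClassicalEpsilon.
Require Coquelicot.Coquelicot.
Open Scope R_scope.

Definition LimN {X : Type} (Nb : R -> X -> Prop) (f : X -> R) (l : R) :=
  forall eps, 0 < eps -> exists d, 0 < d /\ forall p, Nb d p -> Rabs (f p - l) < eps.
Definition monoN {X : Type} (Nb : R -> X -> Prop) :=
  forall d d' p, d <= d' -> Nb d p -> Nb d' p.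

Lemma LimN_ext {X} (Nb : R -> X -> Prop) f g l :
  (forall d p, Nb d p -> f p = g p) -> LimN Nb f l -> LimN Nb g l.
Proof.
  intros E H eps He. destruct (H eps He) as [d [Hd Hp]]. exists d; split; auto.
  intros p Hn. rewrite <- (E d p Hn). auto.
Qed.

Lemma LimN_const {X} (Nb : R -> X -> Prop) c : LimN Nb (fun _ => c) c.
Proof. intros eps He. exists 1; split; [lra|]. intros. unfold Rminus; rewrite Rplus_opp_r, Rabs_R0; auto. Qed.

Lemma LimN_plus {X} (Nb : R -> X -> Prop) f g l m : monoN Nb ->
  LimN Nb f l -> LimN Nb g m -> LimN Nb (fun p => f p + g p) (l + m).
Proof.
  intros Hm Hf Hg eps He.
  destruct (Hf (eps/2)) as [d1 [H1 P1]]; [lra|].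
  destruct (Hg (eps/2)) as [d2 [H2 P2]]; [lra|].
  exists (Rmin d1 d2); split; [apply Rmin_glb_lt; auto|].
  intros p Hp.
  assert (A := P1 p (Hm _ _ _ (Rmin_l _ _) Hp)).
  assert (B := P2 p (Hm _ _ _ (Rmin_r _ _) Hp)).
  replace (f p + g p - (l + m)) with ((f p - l) + (g p - m)) by ring.
  eapply Rle_lt_trans; [apply Rabs_triang|]. lra.
Qed.

Lemma LimN_mult {X} (Nb : R -> X -> Prop) f g l m : monoN Nb ->
  LimN Nb f l -> LimN Nb g m -> LimN Nb (fun p => f p * g p) (l * m).
Proof.
  intros Hm Hf Hg eps He.
  set (K := 1 + Rabs l + Rabs m).
  assert (HK : 0 < K) by (unfold K; pose proof (Rabs_pos l); pose proof (Rabs_pos m); lra).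
  set (eta := Rmin 1 (eps / K)).
  assert (Heta : 0 < eta) by (apply Rmin_glb_lt; [lra| apply Rdiv_lt_0_compat; auto]).
  assert (Heta1 : eta <= 1) by apply Rmin_l.
  assert (Heta2 : eta * K <= eps).
  { assert (eta <= eps / K) by apply Rmin_r.
    apply Rmult_le_compat_r with (r := K) in H; [|lra].
    unfold Rdiv in H. rewrite Rmult_assoc, Rinv_l in H; lra. }
  destruct (Hf eta Heta) as [d1 [H1 P1]].
  destruct (Hg eta Heta) as [d2 [H2 P2]].
  exists (Rmin d1 d2); split; [apply Rmin_glb_lt; auto|].
  intros p Hp.
  assert (A := P1 p (Hm _ _ _ (Rmin_l _ _) Hp)).
  assert (B := P2 p (Hm _ _ _ (Rmin_r _ _) Hp)).
  replace (f p * g p - l * m) with ((f p - l) * (g p - m) + l * (g p - m) + m * (f p - l)) by ring.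
  eapply Rle_lt_trans; [apply Rabs_triang|].
  eapply Rle_lt_trans; [apply Rplus_le_compat_r; apply Rabs_triang|].
  rewrite !Rabs_mult.
  pose proof (Rabs_pos l); pose proof (Rabs_pos m);
  pose proof (Rabs_pos (f p - l)); pose proof (Rabs_pos (g p - m)).
  unfold K in Heta2.
  assert (Rabs (f p - l) * Rabs (g p - m) < eta * 1).
  { apply Rle_lt_trans with (eta * Rabs (g p - m)). apply Rmult_le_compat_r; lra.
    apply Rmult_lt_compat_l; lra. }
  assert (Rabs l * Rabs (g p - m) <= Rabs l * eta) by (apply Rmult_le_compat_l; lra).
  assert (Rabs m * Rabs (f p - l) <= Rabs m * eta) by (apply Rmult_le_compat_l; lra).
  nra.
Qed.

Lemma LimN_opp {X} (Nb : R -> X -> Prop) f l :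
  LimN Nb f l -> LimN Nb (fun p => - f p) (- l).
Proof.
  intros H eps He. destruct (H eps He) as [d [Hd P]]. exists d; split; auto.
  intros p Hp. replace (- f p - - l) with (- (f p - l)) by ring. rewrite Rabs_Ropp; auto.
Qed.

Definition Nb1 (S : R -> Prop) (x : R) : R -> R -> Prop :=
  fun d h => h <> 0 /\ Rabs h < d /\ S (x + h).

Lemma monoN1 S x : monoN (Nb1 S x).
Proof. intros d d' h Hd [A [B C]]. repeat split; auto; lra. Qed.

Lemma deriv_Lim S g x l :
  is_deriv_in S g x l <-> LimN (Nb1 S x) (fun h => (g (x + h) - g x) / h) l.
Proof.
  split.
  - intros H eps He. destruct (H eps He) as [d [Hd P]]. exists d; split; auto.
    intros h [A [B C]]. auto.
  - intros H eps He. destruct (H eps He) as [d [Hd P]]. exists d; split; auto.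
    intros h A B C. apply P. repeat split; auto.
Qed.

Lemma deriv_cont S g x l : is_deriv_in S g x l ->
  LimN (Nb1 S x) (fun h => g (x + h)) (g x).
Proof.
  intros H. apply deriv_Lim in H.
  assert (Hid : LimN (Nb1 S x) (fun h => h) 0).
  { intros eps He. exists eps; split; auto. intros h [A [B C]].
    rewrite Rminus_0_r; auto. }
  pose proof (LimN_mult _ _ _ _ _ (monoN1 S x) Hid H) as Hm.
  pose proof (LimN_plus _ _ _ _ _ (monoN1 S x) (LimN_const _ (g x)) Hm) as Hp.
  rewrite Rmult_0_l, Rplus_0_r in Hp.
  eapply LimN_ext; [|exact Hp]. intros d h [A [B C]]. simpl. field. auto.
Qed.

Lemma deriv_plus S f g x l m : is_deriv_in S f x l -> is_deriv_in S g x m ->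
  is_deriv_in S (fun y => f y + g y) x (l + m).
Proof.
  intros Hf Hg. apply deriv_Lim in Hf; apply deriv_Lim in Hg. apply deriv_Lim.
  eapply LimN_ext; [|exact (LimN_plus _ _ _ _ _ (monoN1 S x) Hf Hg)].
  intros d h _. simpl. unfold Rdiv. ring.
Qed.

Lemma deriv_opp S f x l : is_deriv_in S f x l ->
  is_deriv_in S (fun y => - f y) x (- l).
Proof.
  intros Hf. apply deriv_Lim in Hf. apply deriv_Lim.
  eapply LimN_ext; [|exact (LimN_opp _ _ _ Hf)].
  intros d h _. simpl. unfold Rdiv. ring.
Qed.

Lemma deriv_const S c x : is_deriv_in S (fun _ => c) x 0.
Proof.
  apply deriv_Lim. eapply LimN_ext; [|exact (LimN_const _ 0)].
  intros d h _. simpl. unfold Rdiv. ring.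
Qed.

Lemma deriv_id S x : is_deriv_in S (fun y => y) x 1.
Proof.
  apply deriv_Lim. eapply LimN_ext; [|exact (LimN_const _ 1)].
  intros d h [A _]. simpl. field. auto.
Qed.

Lemma deriv_mult S f g x l m : is_deriv_in S f x l -> is_deriv_in S g x m ->
  is_deriv_in S (fun y => f y * g y) x (l * g x + f x * m).
Proof.
  intros Hf Hg. pose proof (deriv_cont _ _ _ _ Hg) as Hc.
  apply deriv_Lim in Hf; apply deriv_Lim in Hg. apply deriv_Lim.
  pose proof (LimN_mult _ _ _ _ _ (monoN1 S x) Hf Hc) as A.
  pose proof (LimN_mult _ _ _ _ _ (monoN1 S x) (LimN_const _ (f x)) Hg) as B.
  eapply LimN_ext; [|exact (LimN_plus _ _ _ _ _ (monoN1 S x) A B)].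
  intros d h _. simpl. unfold Rdiv. ring.
Qed.

Lemma deriv_mono (S S' : R -> Prop) g x l : (forall y, S' y -> S y) ->
  is_deriv_in S g x l -> is_deriv_in S' g x l.
Proof.
  intros HS H eps He. destruct (H eps He) as [d [Hd P]]. exists d; split; auto.
Qed.

Lemma deriv_ext (S : R -> Prop) g g' x l : (forall y, S y -> g y = g' y) -> S x ->
  is_deriv_in S g x l -> is_deriv_in S g' x l.
Proof.
  intros E Sx H eps He. destruct (H eps He) as [d [Hd P]]. exists d; split; auto.
  intros h A B C. rewrite <- (E _ C), <- (E _ Sx). auto.
Qed.

Lemma deriv_ext2 (S : R -> Prop) g x l l' : l = l' ->
  is_deriv_in S g x l -> is_deriv_in S g x l'.
Proof. intros ->; auto. Qed.

Lemma deriv_uniq S g x l1 l2 :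
  (forall d, 0 < d -> exists h, Nb1 S x d h) ->
  is_deriv_in S g x l1 -> is_deriv_in S g x l2 -> l1 = l2.
Proof.
  intros Hp H1 H2.
  destruct (Req_dec l1 l2) as [|Hne]; auto. exfalso.
  set (eps := Rabs (l1 - l2) / 2).
  assert (He : 0 < eps) by (unfold eps; apply Rdiv_lt_0_compat; [apply Rabs_pos_lt; lra|lra]).
  destruct (H1 eps He) as [d1 [Hd1 P1]]. destruct (H2 eps He) as [d2 [Hd2 P2]].
  destruct (Hp (Rmin d1 d2)) as [h [A [B C]]]; [apply Rmin_glb_lt; auto|].
  assert (Q1 := P1 h A (Rlt_le_trans _ _ _ B (Rmin_l _ _)) C).
  assert (Q2 := P2 h A (Rlt_le_trans _ _ _ B (Rmin_r _ _)) C).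
  assert (Rabs (l1 - l2) <= Rabs ((g (x + h) - g x) / h - l1) + Rabs ((g (x + h) - g x) / h - l2)).
  { replace (l1 - l2) with (- ((g (x + h) - g x) / h - l1) + ((g (x + h) - g x) / h - l2)) by ring.
    eapply Rle_trans; [apply Rabs_triang|]. rewrite Rabs_Ropp. lra. }
  unfold eps in *. lra.
Qed.

Lemma interval_pts e x : 0 < e -> 0 <= x <= e ->
  forall d, 0 < d -> exists h, h <> 0 /\ Rabs h < d /\ 0 <= x + h <= e.
Proof.
  intros He Hx d Hd.
  destruct (Rlt_le_dec x e) as [Hlt|Hge].
  - exists (Rmin (d/2) (e - x)).
    assert (0 < Rmin (d/2) (e-x)) by (apply Rmin_glb_lt; lra).
    pose proof (Rmin_l (d/2) (e-x)); pose proof (Rmin_r (d/2) (e-x)).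
    rewrite Rabs_pos_eq; [|lra]. repeat split; lra.
  - exists (- Rmin (d/2) e).
    assert (0 < Rmin (d/2) e) by (apply Rmin_glb_lt; lra).
    pose proof (Rmin_l (d/2) e); pose proof (Rmin_r (d/2) e).
    rewrite Rabs_Ropp, Rabs_pos_eq; [|lra]. repeat split; lra.
Qed.

Definition clamp a b y := Rmax a (Rmin b y).

Lemma clamp_in a b y : a <= b -> a <= clamp a b y <= b.
Proof. intros. unfold clamp, Rmax, Rmin. repeat destruct Rle_dec; lra. Qed.
Lemma clamp_id a b y : a <= y <= b -> clamp a b y = y.
Proof. intros. unfold clamp, Rmax, Rmin. repeat destruct Rle_dec; lra. Qed.
Lemma clamp_dist a b y x : a <= x <= b -> Rabs (clamp a b y - x) <= Rabs (y - x).
Proof.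
  intros. unfold clamp, Rmax, Rmin. unfold Rabs.
  repeat (destruct Rle_dec); repeat destruct Rcase_abs; lra.
Qed.

Lemma mvt_ineq a b g dg K : a <= b ->
  (forall y, a <= y <= b -> is_deriv_in (fun z => a <= z <= b) g y (dg y)) ->
  (forall y, a <= y <= b -> Rabs (dg y) <= K) ->
  Rabs (g b - g a) <= K * (b - a).
Proof.
  intros Hab Hd HK.
  destruct (Req_dec a b) as [<-|Hne].
  { unfold Rminus; rewrite !Rplus_opp_r, Rabs_R0, Rmult_0_r; lra. }
  assert (Hlt : a < b) by lra.
  set (G := fun y => g (clamp a b y)).
  destruct (Coquelicot.Derive.MVT_gen G a b dg) as [c [Hc Heq]].
  - rewrite Rmin_left, Rmax_right by lra. intros x Hx.
    apply Coquelicot.Derive.is_derive_Reals.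
    intros eps He. destruct (Hd x ltac:(lra) eps He) as [d [Hd0 P]].
    assert (Hm : 0 < Rmin d (Rmin (x - a) (b - x))) by
      (apply Rmin_glb_lt; [auto| apply Rmin_glb_lt; lra]).
    exists (mkposreal _ Hm). intros h Hh0 Hh. simpl in Hh.
    pose proof (Rmin_l d (Rmin (x-a) (b-x))). pose proof (Rmin_r d (Rmin (x-a) (b-x))).
    pose proof (Rmin_l (x-a) (b-x)). pose proof (Rmin_r (x-a) (b-x)).
    assert (Rabs h < x - a /\ Rabs h < b - x) by lra.
    assert (- (x - a) < h < b - x) by (destruct H3; split; [apply Rabs_def2 in H3|apply Rabs_def2 in H4]; lra).
    unfold G. rewrite !clamp_id by lra.
    apply P; auto; lra.
  - rewrite Rmin_left, Rmax_right by lra. intros x Hx.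
    unfold Ranalysis1.continuity_pt, Rderiv.continue_in, Rlimit.limit1_in, Rlimit.limit_in.
    intros eps He. pose proof (deriv_cont _ _ _ _ (Hd x Hx)) as Hc.
    destruct (Hc eps He) as [d [Hd0 P]]. exists d; split; auto.
    intros y [_ Hy]. simpl in Hy. unfold Rfunctions.R_dist in *; simpl in *.
    unfold G. rewrite (clamp_id a b x) by lra.
    destruct (Req_dec (clamp a b y) x) as [E|E].
    + rewrite E. unfold Rfunctions.R_dist, Rdist; simpl. unfold Rminus; rewrite Rplus_opp_r, Rabs_R0; auto.
    + specialize (P (clamp a b y - x)).
      replace (x + (clamp a b y - x)) with (clamp a b y) in P by ring.
      apply P. split; [lra|split].
      * eapply Rle_lt_trans; [apply clamp_dist; lra|auto].
      * replace (x + (clamp a b y - x)) with (clamp a b y) by ring. apply clamp_in; lra.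
  - rewrite Rmin_left, Rmax_right in Hc by lra.
    unfold G in Heq. rewrite !clamp_id in Heq by lra. rewrite Heq.
    rewrite Rabs_mult, (Rabs_pos_eq (b - a)) by lra.
    apply Rmult_le_compat_r; [lra|]. apply HK; lra.
Qed.

Lemma between_dist x y z : Rmin x y <= z <= Rmax x y -> Rabs (z - x) <= Rabs (y - x).
Proof. unfold Rmin, Rmax, Rabs. intros. repeat destruct Rle_dec; repeat destruct Rcase_abs; lra. Qed.
Lemma between_in lo hi x y z : lo <= x <= hi -> lo <= y <= hi -> Rmin x y <= z <= Rmax x y -> lo <= z <= hi.
Proof. unfold Rmin, Rmax. intros. repeat destruct Rle_dec; lra. Qed.

Lemma mvt2 (S : R -> Prop) g dg K x y :
  (forall z, Rmin x y <= z <= Rmax x y -> S z) ->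
  (forall z, Rmin x y <= z <= Rmax x y -> is_deriv_in S g z (dg z)) ->
  (forall z, Rmin x y <= z <= Rmax x y -> Rabs (dg z) <= K) ->
  Rabs (g y - g x) <= K * Rabs (y - x).
Proof.
  intros HS Hd HK. destruct (Rle_dec x y) as [Hxy|Hxy].
  - rewrite Rmin_left, Rmax_right in * by lra. rewrite (Rabs_pos_eq (y - x)) by lra.
    apply (mvt_ineq x y g dg K); auto. intros z Hz. eapply deriv_mono; [|apply Hd; auto]. simpl. auto.
  - rewrite Rmin_right, Rmax_left in * by lra.
    rewrite Rabs_minus_sym, (Rabs_minus_sym y x), (Rabs_pos_eq (x - y)) by lra.
    apply (mvt_ineq y x g dg K); [lra| |auto]. intros z Hz. eapply deriv_mono; [|apply Hd; auto]. simpl. auto.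
Qed.

Definition RF := R -> R -> R.
Definition dxr (e : R) (u u' : RF) : Prop :=
  forall x t, Sq e x t -> is_deriv_in (fun y => Sq e y t) (fun y => u y t) x (u' x t).
Definition dtr (e : R) (u u' : RF) : Prop :=
  forall x t, Sq e x t -> is_deriv_in (fun s => Sq e x s) (fun s => u x s) t (u' x t).
Definition Nb2 (e x t : R) : R -> (R * R) -> Prop :=
  fun d p => Sq e (fst p) (snd p) /\ Rabs (fst p - x) < d /\ Rabs (snd p - t) < d.
Definition contr (e : R) (u : RF) : Prop :=
  forall x t, Sq e x t -> LimN (Nb2 e x t) (fun p => u (fst p) (snd p)) (u x t).

Lemma monoN2 e x t : monoN (Nb2 e x t).
Proof. intros d d' p Hd [A [B C]]. split; [exact A|split; lra]. Qed.

Lemma le_eps a b : (forall eta, 0 < eta -> a <= b + eta) -> a <= b.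
Proof.
  intros H. destruct (Rle_dec a b); auto. specialize (H ((a - b)/2)). lra.
Qed.

Lemma schwarz e u U T Y : 0 < e ->
  dxr e u U -> dtr e u T -> dxr e T Y -> contr e Y -> dtr e U Y.
Proof.
  intros He HU HT HY HcY x t Hxt eps Heps.
  destruct (HcY x t Hxt (eps/2)) as [d [Hd Pd]]; [lra|].
  exists d; split; auto. intros s Hs0 Hsd Hxs.
  assert (K : Rabs (U x (t + s) - U x t - s * Y x t) <= Rabs s * (eps / 2)).
  { apply le_eps. intros eta Heta.
    destruct (HU x (t + s) Hxs (eta/2)) as [d1 [Hd1 P1]]; [lra|].
    destruct (HU x t Hxt (eta/2)) as [d2 [Hd2 P2]]; [lra|].
    destruct Hxt as [Hx Ht]. destruct Hxs as [_ Hts].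
    destruct (interval_pts e x He Hx (Rmin d (Rmin d1 d2))) as [h [Hh0 [Hhd Hxh]]].
    { apply Rmin_glb_lt; auto. apply Rmin_glb_lt; auto. }
    pose proof (Rmin_l d (Rmin d1 d2)). pose proof (Rmin_r d (Rmin d1 d2)).
    pose proof (Rmin_l d1 d2). pose proof (Rmin_r d1 d2).
    assert (Q1 := P1 h Hh0 ltac:(lra) (conj Hxh Hts)).
    assert (Q2 := P2 h Hh0 ltac:(lra) (conj Hxh Ht)).
    simpl in Q1, Q2.
    assert (Hin : forall tau, Rmin t (t + s) <= tau <= Rmax t (t + s) ->
       Rabs (T (x + h) tau - T x tau - h * Y x t) <= Rabs h * (eps / 2)).
    { intros tau Htau.
      assert (Ttau : 0 <= tau <= e) by (eapply between_in; [exact Ht|exact Hts|exact Htau]).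
      assert (Dtau : Rabs (tau - t) < d) by (pose proof (between_dist _ _ _ Htau) as HH; replace (t + s - t) with s in HH by ring; lra).
      pose proof (mvt2 (fun y => Sq e y tau) (fun y => T y tau - Y x t * y)
                   (fun y => Y y tau - Y x t) (eps/2) x (x + h)) as M.
      replace (T (x + h) tau - T x tau - h * Y x t) with
        (T (x + h) tau - Y x t * (x + h) - (T x tau - Y x t * x)) by ring.
      replace (Rabs h) with (Rabs (x + h - x)) by (f_equal; ring).
      replace (Rabs (x + h - x) * (eps / 2)) with (eps / 2 * Rabs (x + h - x)) by ring. apply M.
      - intros z Hz. split; [eapply between_in; [exact Hx|exact Hxh|exact Hz]|auto].
      - intros z Hz. replace (Y z tau - Y x t) with (Y z tau + - (Y x t * 1)) by ring.
        apply deriv_plus.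
        + apply HY. split; [eapply between_in; [exact Hx|exact Hxh|exact Hz]|auto].
        + apply deriv_opp. eapply deriv_ext2; [|apply (deriv_mult _ (fun _ => Y x t) (fun y => y) z 0 1); [apply deriv_const|apply deriv_id]]. ring.
      - intros z Hz. left. apply (Pd (z, tau)). split; [|split]; simpl.
        + split; [eapply between_in; [exact Hx|exact Hxh|exact Hz]|auto].
        + pose proof (between_dist _ _ _ Hz). replace (x + h - x) with h in H3 by ring. lra.
        + auto. }
    pose proof (mvt2 (fun tau => 0 <= tau <= e)
                 (fun tau => u (x + h) tau - u x tau - h * Y x t * tau)
                 (fun tau => T (x + h) tau - T x tau - h * Y x t)
                 (Rabs h * (eps / 2)) t (t + s)) as M.
    assert (Hpsi : Rabs (u (x + h) (t + s) - u x (t + s) - (u (x + h) t - u x t) - h * s * Y x t)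
                   <= Rabs h * (eps / 2) * Rabs s).
    { replace (u (x + h) (t + s) - u x (t + s) - (u (x + h) t - u x t) - h * s * Y x t)
        with ((u (x + h) (t + s) - u x (t + s) - h * Y x t * (t + s))
              - (u (x + h) t - u x t - h * Y x t * t)) by ring.
      replace (Rabs s) with (Rabs (t + s - t)) by (f_equal; ring).
      apply M; auto.
      - intros z Hz. eapply between_in; [exact Ht|exact Hts|exact Hz].
      - intros z Hz. assert (Tz : 0 <= z <= e) by (eapply between_in; [exact Ht|exact Hts|exact Hz]).
        apply deriv_plus; [apply deriv_plus|].
        + eapply deriv_mono; [|apply HT; split; [exact Hxh|exact Tz]]. simpl. intros y Hy; split; auto.
        + apply deriv_opp. eapply deriv_mono; [|apply HT; split; [exact Hx|exact Tz]]. simpl. intros y Hy; split; auto.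
        + apply deriv_opp. eapply deriv_ext2; [|apply (deriv_mult _ (fun _ => h * Y x t) (fun y => y) z 0 1); [apply deriv_const|apply deriv_id]]. ring. }
    set (A1 := (u (x + h) (t + s) - u x (t + s)) / h) in *.
    set (A0 := (u (x + h) t - u x t) / h) in *.
    assert (HA : Rabs (A1 - A0 - s * Y x t) <= Rabs s * (eps / 2)).
    { assert (E : A1 - A0 - s * Y x t =
          (u (x + h) (t + s) - u x (t + s) - (u (x + h) t - u x t) - h * s * Y x t) / h)
        by (unfold A1, A0; field; auto).
      rewrite E. unfold Rdiv. rewrite Rabs_mult, Rabs_inv.
      apply Rle_trans with (Rabs h * (eps / 2) * Rabs s * / Rabs h).
      - apply Rmult_le_compat_r; auto. left; apply Rinv_0_lt_compat, Rabs_pos_lt; auto.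
      - right. field. apply Rabs_no_R0; auto. }
    replace (U x (t + s) - U x t - s * Y x t) with
      ((A1 - A0 - s * Y x t) - (A1 - U x (t + s)) + (A0 - U x t)) by ring.
    eapply Rle_trans; [apply Rabs_triang|].
    eapply Rle_trans; [apply Rplus_le_compat_r; apply Rabs_triang|].
    rewrite Rabs_Ropp. lra. }
  replace ((U x (t + s) - U x t) / s - Y x t) with ((U x (t + s) - U x t - s * Y x t) / s)
    by (field; auto).
  unfold Rdiv. rewrite Rabs_mult, Rabs_inv.
  apply Rle_lt_trans with (Rabs s * (eps / 2) * / Rabs s).
  - apply Rmult_le_compat_r; auto. left; apply Rinv_0_lt_compat, Rabs_pos_lt; auto.
  - replace (Rabs s * (eps / 2) * / Rabs s) with (eps/2) by (field; apply Rabs_no_R0; auto). lra.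
Qed.

Section E.
Variable e : R.

Lemma contr_plus u w : contr e u -> contr e w -> contr e (fun x t => u x t + w x t).
Proof. intros Hu Hw x t H. exact (LimN_plus _ _ _ _ _ (monoN2 e x t) (Hu x t H) (Hw x t H)). Qed.
Lemma contr_mult u w : contr e u -> contr e w -> contr e (fun x t => u x t * w x t).
Proof. intros Hu Hw x t H. exact (LimN_mult _ _ _ _ _ (monoN2 e x t) (Hu x t H) (Hw x t H)). Qed.
Lemma contr_opp u : contr e u -> contr e (fun x t => - u x t).
Proof. intros Hu x t H. exact (LimN_opp _ _ _ (Hu x t H)). Qed.
Lemma contr_const c : contr e (fun _ _ => c).
Proof. intros x t H. exact (LimN_const _ c). Qed.
Lemma contr_ext u w : (forall x t, Sq e x t -> u x t = w x t) -> contr e u -> contr e w.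
Proof.
  intros E Hu x t H. rewrite <- (E x t H). eapply LimN_ext; [|exact (Hu x t H)].
  intros d p [A _]. simpl. apply E; auto.
Qed.

Lemma dxr_plus u u' w w' : dxr e u u' -> dxr e w w' ->
  dxr e (fun x t => u x t + w x t) (fun x t => u' x t + w' x t).
Proof. intros Hu Hw x t H. exact (deriv_plus _ _ _ _ _ _ (Hu x t H) (Hw x t H)). Qed.
Lemma dxr_mult u u' w w' : dxr e u u' -> dxr e w w' ->
  dxr e (fun x t => u x t * w x t) (fun x t => u' x t * w x t + u x t * w' x t).
Proof. intros Hu Hw x t H. exact (deriv_mult _ _ _ _ _ _ (Hu x t H) (Hw x t H)). Qed.
Lemma dxr_opp u u' : dxr e u u' -> dxr e (fun x t => - u x t) (fun x t => - u' x t).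
Proof. intros Hu x t H. exact (deriv_opp _ _ _ _ (Hu x t H)). Qed.
Lemma dxr_const c : dxr e (fun _ _ => c) (fun _ _ => 0).
Proof. intros x t H. exact (deriv_const _ c x). Qed.
Lemma dxr_ext u u' w w' : (forall x t, Sq e x t -> u x t = w x t) ->
  (forall x t, Sq e x t -> u' x t = w' x t) -> dxr e u u' -> dxr e w w'.
Proof.
  intros E E' Hu x t H. rewrite <- (E' x t H).
  eapply deriv_ext; [|exact H|exact (Hu x t H)]. simpl. intros y Hy. apply E; auto.
Qed.
Lemma dtr_ext u u' w w' : (forall x t, Sq e x t -> u x t = w x t) ->
  (forall x t, Sq e x t -> u' x t = w' x t) -> dtr e u u' -> dtr e w w'.
Proof.
  intros E E' Hu x t H. rewrite <- (E' x t H).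
  eapply deriv_ext; [|exact H|exact (Hu x t H)]. simpl. intros y Hy. apply E; auto.
Qed.

Hypothesis He : 0 < e.

Lemma dxr_uniq u u1 u2 : dxr e u u1 -> dxr e u u2 -> forall x t, Sq e x t -> u1 x t = u2 x t.
Proof.
  intros H1 H2 x t H. eapply deriv_uniq; [|exact (H1 x t H)|exact (H2 x t H)].
  intros d Hd. destruct H as [Hx Ht].
  destruct (interval_pts e x He Hx d Hd) as [h [A [B C]]]. exists h. split; [auto|split; [auto|split; auto]].
Qed.
Lemma dtr_uniq u u1 u2 : dtr e u u1 -> dtr e u u2 -> forall x t, Sq e x t -> u1 x t = u2 x t.
Proof.
  intros H1 H2 x t H. eapply deriv_uniq; [|exact (H1 x t H)|exact (H2 x t H)].
  intros d Hd. destruct H as [Hx Ht].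
  destruct (interval_pts e t He Ht d Hd) as [h [A [B C]]]. exists h. split; [auto|split; [auto|split; auto]].
Qed.

Fixpoint Gd (n : nat) (u : RF) : Prop :=
  contr e u /\ match n with O => True | S m => exists u', dxr e u u' /\ Gd m u' end.

Fixpoint Ag (n : nat) (u w : RF) : Prop :=
  (forall t, 0 <= t <= e -> u 0 t = w 0 t) /\
  match n with O => True | S m => exists u' w', dxr e u u' /\ dxr e w w' /\ Ag m u' w' end.

Lemma Gd_weak n u : Gd (S n) u -> Gd n u.
Proof.
  revert u; induction n; intros u [Hc [u' [Hd Hg]]]; simpl; split; auto.
  exists u'; split; auto.
Qed.
Lemma Ag_weak n u w : Ag (S n) u w -> Ag n u w.
Proof.
  revert u w; induction n; intros u w [Hc [u' [w' [Hd [Hd' Hg]]]]]; simpl; split; auto.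
  exists u', w'; repeat split; auto.
Qed.

Lemma Gd_plus n u w : Gd n u -> Gd n w -> Gd n (fun x t => u x t + w x t).
Proof.
  revert u w; induction n; intros u w [Hu Hu'] [Hw Hw']; split; try apply contr_plus; auto.
  destruct Hu' as [u' [Du Gu]]; destruct Hw' as [w' [Dw Gw]].
  eexists; split; [apply dxr_plus; eauto|]. apply IHn; auto.
Qed.
Lemma Gd_opp n u : Gd n u -> Gd n (fun x t => - u x t).
Proof.
  revert u; induction n; intros u [Hu Hu']; split; try apply contr_opp; auto.
  destruct Hu' as [u' [Du Gu]].
  eexists; split; [apply dxr_opp; eauto|]. apply IHn; auto.
Qed.
Lemma Gd_const n c : Gd n (fun _ _ => c).
Proof.
  revert c; induction n; intros c; split; try apply contr_const; auto.
  eexists; split; [apply dxr_const|]. apply IHn.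
Qed.
Lemma Gd_mult n u w : Gd n u -> Gd n w -> Gd n (fun x t => u x t * w x t).
Proof.
  revert u w; induction n; intros u w Gu Gw.
  - split; auto. apply contr_mult; [apply Gu|apply Gw].
  - split; [apply contr_mult; [apply Gu|apply Gw]|].
    pose proof (Gd_weak _ _ Gu) as Gu0. pose proof (Gd_weak _ _ Gw) as Gw0.
    destruct Gu as [_ [u' [Du Gu']]]; destruct Gw as [_ [w' [Dw Gw']]].
    eexists; split; [apply dxr_mult; eauto|].
    apply Gd_plus; apply IHn; auto.
Qed.

Lemma Ag_plus n u w u2 w2 : Ag n u w -> Ag n u2 w2 ->
  Ag n (fun x t => u x t + u2 x t) (fun x t => w x t + w2 x t).
Proof.
  revert u w u2 w2; induction n; intros u w u2 w2 [Hu Hu'] [Hw Hw'];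
    (split; [intros t Ht; rewrite Hu, Hw; auto|]); auto.
  destruct Hu' as [u' [w' [D1 [D2 G]]]]; destruct Hw' as [u2' [w2' [D3 [D4 G2]]]].
  do 2 eexists; split; [apply dxr_plus; eauto|split; [apply dxr_plus; eauto|]].
  apply IHn; auto.
Qed.
Lemma Ag_opp n u w : Ag n u w -> Ag n (fun x t => - u x t) (fun x t => - w x t).
Proof.
  revert u w; induction n; intros u w [Hu Hu']; (split; [intros t Ht; rewrite Hu; auto|]); auto.
  destruct Hu' as [u' [w' [D1 [D2 G]]]].
  do 2 eexists; split; [apply dxr_opp; eauto|split; [apply dxr_opp; eauto|]]. apply IHn; auto.
Qed.
Lemma Ag_const n c : Ag n (fun _ _ => c) (fun _ _ => c).
Proof.
  revert c; induction n; intros c; split; auto.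
  do 2 eexists; split; [apply dxr_const|split; [apply dxr_const|]]. apply IHn.
Qed.
Lemma Ag_mult n u w u2 w2 : Ag n u w -> Ag n u2 w2 ->
  Ag n (fun x t => u x t * u2 x t) (fun x t => w x t * w2 x t).
Proof.
  revert u w u2 w2; induction n; intros u w u2 w2 A1 A2.
  - split; auto. intros t Ht. rewrite (proj1 A1), (proj1 A2); auto.
  - split; [intros t Ht; rewrite (proj1 A1), (proj1 A2); auto|].
    pose proof (Ag_weak _ _ _ A1) as A10. pose proof (Ag_weak _ _ _ A2) as A20.
    destruct A1 as [_ [u' [w' [D1 [D2 G]]]]]; destruct A2 as [_ [u2' [w2' [D3 [D4 G2]]]]].
    do 2 eexists; split; [apply dxr_mult; eauto|split; [apply dxr_mult; eauto|]].
    apply Ag_plus; apply IHn; auto.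
Qed.
Lemma Ag_ext n u w u2 w2 : (forall x t, Sq e x t -> u x t = u2 x t) ->
  (forall x t, Sq e x t -> w x t = w2 x t) -> Ag n u w -> Ag n u2 w2.
Proof.
  intros E1 E2 HA. destruct n; destruct HA as [H0 H1]; split;
    try (intros t Ht; rewrite <- E1, <- E2 by (split; lra); auto); auto.
  - destruct H1 as [u' [w' [D1 [D2 G]]]].
    exists u', w'; split; [|split]; auto.
    + eapply dxr_ext; [exact E1| |exact D1]; auto.
    + eapply dxr_ext; [exact E2| |exact D2]; auto.
Qed.

Definition realfam (n : nat) (D : nat -> RF) : Prop :=
  (forall j, (j < n)%nat -> dxr e (D j) (D (S j))) /\ (forall j, (j <= n)%nat -> contr e (D j)).

Lemma fam_Gd n D : realfam n D -> forall m j, (j + m <= n)%nat -> Gd m (D j).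
Proof.
  intros [H1 H2] m. induction m; intros j Hj; split.
  - apply H2; lia.
  - exact I.
  - apply H2; lia.
  - exists (D (S j)); split; [apply H1; lia|]. apply IHm; lia.
Qed.

Lemma fam_Ag n D E k : realfam n D -> realfam n E -> (k <= n)%nat ->
  (forall j t, (j <= k)%nat -> 0 <= t <= e -> D j 0 t = E j 0 t) ->
  forall m j, (j + m <= k)%nat -> Ag m (D j) (E j).
Proof.
  intros [H1 H2] [H3 H4] Hk HA m. induction m; intros j Hj; split.
  - intros; apply HA; auto; lia.
  - exact I.
  - intros; apply HA; auto; lia.
  - exists (D (S j)), (E (S j)); split; [apply H1; lia|split; [apply H3; lia|]]. apply IHm; lia.
Qed.

Lemma Ag_uniq k : forall n u w D E, Ag k u w -> realfam n D -> realfam n E -> (k <= n)%nat ->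
  (forall x t, Sq e x t -> D 0%nat x t = u x t) ->
  (forall x t, Sq e x t -> E 0%nat x t = w x t) ->
  forall t, 0 <= t <= e -> D k 0 t = E k 0 t.
Proof.
  induction k; intros n u w D E A FD FE Hk ED EE t Ht.
  - rewrite ED, EE by (split; lra). apply A; auto.
  - destruct n as [|n]; [lia|].
    destruct A as [_ [u' [w' [D1 [D2 G]]]]].
    destruct FD as [FD1 FD2]; destruct FE as [FE1 FE2].
    apply (IHk n u' w' (fun j => D (S j)) (fun j => E (S j))); auto; try lia.
    + split; intros j Hj; [apply FD1|apply FD2]; lia.
    + split; intros j Hj; [apply FE1|apply FE2]; lia.
    + intros x s Hxs. apply (dxr_uniq u); auto.
      eapply dxr_ext; [exact ED| |apply FD1; lia]. auto.
    + intros x s Hxs. apply (dxr_uniq w); auto.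
      eapply dxr_ext; [exact EE| |apply FE1; lia]. auto.
Qed.

End E.

Section Gen.
Variable Rel : RF -> RF -> Prop.
Hypothesis Rplus_h : forall u w u2 w2, Rel u w -> Rel u2 w2 ->
  Rel (fun x t => u x t + u2 x t) (fun x t => w x t + w2 x t).
Hypothesis Rmult_h : forall u w u2 w2, Rel u w -> Rel u2 w2 ->
  Rel (fun x t => u x t * u2 x t) (fun x t => w x t * w2 x t).
Hypothesis Ropp_h : forall u w, Rel u w -> Rel (fun x t => - u x t) (fun x t => - w x t).
Hypothesis Rconst_h : forall c, Rel (fun _ _ => c) (fun _ _ => c).

Definition CRel (f g : R -> R -> Defs.C) : Prop :=
  Rel (fun x t => fst (f x t)) (fun x t => fst (g x t)) /\
  Rel (fun x t => snd (f x t)) (fun x t => snd (g x t)).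

Lemma CRel_add f g f' g' : CRel f f' -> CRel g g' ->
  CRel (fun x t => Cadd (f x t) (g x t)) (fun x t => Cadd (f' x t) (g' x t)).
Proof. intros [A B] [A' B']. split; simpl; apply Rplus_h; auto. Qed.

Lemma CRel_mul f g f' g' : CRel f f' -> CRel g g' ->
  CRel (fun x t => Cmul (f x t) (g x t)) (fun x t => Cmul (f' x t) (g' x t)).
Proof.
  intros [A B] [A' B']. split; simpl.
  - unfold Rminus. apply Rplus_h; [|apply Ropp_h]; apply Rmult_h; auto.
  - apply Rplus_h; apply Rmult_h; auto.
Qed.

Lemma CRel_conj f f' : CRel f f' ->
  CRel (fun x t => Cconj (f x t)) (fun x t => Cconj (f' x t)).
Proof. intros [A B]. split; simpl; auto. Qed.

Lemma CRel_Csum n (g g' : R -> R -> nat -> Defs.C) :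
  (forall q, (q < n)%nat -> CRel (fun x t => g x t q) (fun x t => g' x t q)) ->
  CRel (fun x t => Csum n (g x t)) (fun x t => Csum n (g' x t)).
Proof.
  induction n; intros H.
  - split; simpl; apply Rconst_h.
  - simpl. apply (CRel_add (fun x t => Csum n (g x t)) (fun x t => g x t n)
                           (fun x t => Csum n (g' x t)) (fun x t => g' x t n)).
    + apply IHn. intros; apply H; lia.
    + apply H; lia.
Qed.

Lemma CRel_cubic m1 m2 (A B : Mfun) :
  (forall i j, (i < m1)%nat -> (j < m2)%nat ->
     CRel (fun x t => A x t i j) (fun x t => B x t i j)) ->
  forall i j, (i < m1)%nat -> (j < m2)%nat ->
     CRel (fun x t => cubic m1 m2 (A x t) i j) (fun x t => cubic m1 m2 (B x t) i j).
Proof.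
  intros H i j Hi Hj. unfold cubic.
  apply (CRel_Csum m1
    (fun x t q => Cmul (Csum m2 (fun p => Cmul (A x t i p) (Cconj (A x t q p)))) (A x t q j))
    (fun x t q => Cmul (Csum m2 (fun p => Cmul (B x t i p) (Cconj (B x t q p)))) (B x t q j))).
  intros q Hq.
  apply (CRel_mul (fun x t => Csum m2 (fun p => Cmul (A x t i p) (Cconj (A x t q p))))
                  (fun x t => A x t q j)
                  (fun x t => Csum m2 (fun p => Cmul (B x t i p) (Cconj (B x t q p))))
                  (fun x t => B x t q j)); [|apply H; auto].
  apply (CRel_Csum m2 (fun x t p => Cmul (A x t i p) (Cconj (A x t q p)))
                      (fun x t p => Cmul (B x t i p) (Cconj (B x t q p)))).
  intros p Hp.
  apply (CRel_mul (fun x t => A x t i p) (fun x t => Cconj (A x t q p))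
                  (fun x t => B x t i p) (fun x t => Cconj (B x t q p))); [apply H; auto|].
  apply (CRel_conj (fun x t => A x t q p) (fun x t => B x t q p)). apply H; auto.
Qed.
End Gen.

Lemma Cmod_fst z : Rabs (fst z) <= Cmod z.
Proof.
  unfold Cmod. rewrite <- sqrt_Rsqr_abs. apply sqrt_le_1_alt. unfold Rsqr. simpl. nra.
Qed.
Lemma Cmod_snd z : Rabs (snd z) <= Cmod z.
Proof.
  unfold Cmod. rewrite <- sqrt_Rsqr_abs. apply sqrt_le_1_alt. unfold Rsqr. simpl. nra.
Qed.
Lemma Cmod_le z : Cmod z <= Rabs (fst z) + Rabs (snd z).
Proof.
  unfold Cmod. pose proof (Rabs_pos (fst z)); pose proof (Rabs_pos (snd z)).
  rewrite <- (sqrt_Rsqr (Rabs (fst z) + Rabs (snd z))) by lra.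
  apply sqrt_le_1_alt. unfold Rsqr.
  assert (Rabs (fst z) * Rabs (fst z) = fst z * fst z) by
    (rewrite <- Rabs_mult; apply Rabs_pos_eq; nra).
  assert (Rabs (snd z) * Rabs (snd z) = snd z * snd z) by
    (rewrite <- Rabs_mult; apply Rabs_pos_eq; nra).
  simpl. nra.
Qed.

Section Mat.
Variables (m1 m2 : nat) (e : R).

Lemma pdx_split U U' : pdx_in m1 m2 (Sq e) U U' -> forall i j, (i < m1)%nat -> (j < m2)%nat ->
  dxr e (fun x t => fst (U x t i j)) (fun x t => fst (U' x t i j)) /\
  dxr e (fun x t => snd (U x t i j)) (fun x t => snd (U' x t i j)).
Proof. intros H i j Hi Hj. split; intros x t Hxt; apply (H x t i j Hxt Hi Hj). Qed.
Lemma pdx_join U U' : (forall i j, (i < m1)%nat -> (j < m2)%nat ->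
  dxr e (fun x t => fst (U x t i j)) (fun x t => fst (U' x t i j)) /\
  dxr e (fun x t => snd (U x t i j)) (fun x t => snd (U' x t i j))) -> pdx_in m1 m2 (Sq e) U U'.
Proof. intros H x t i j Hxt Hi Hj. split; apply (H i j Hi Hj); auto. Qed.
Lemma pdt_split U U' : pdt_in m1 m2 (Sq e) U U' -> forall i j, (i < m1)%nat -> (j < m2)%nat ->
  dtr e (fun x t => fst (U x t i j)) (fun x t => fst (U' x t i j)) /\
  dtr e (fun x t => snd (U x t i j)) (fun x t => snd (U' x t i j)).
Proof. intros H i j Hi Hj. split; intros x t Hxt; apply (H x t i j Hxt Hi Hj). Qed.
Lemma pdt_join U U' : (forall i j, (i < m1)%nat -> (j < m2)%nat ->
  dtr e (fun x t => fst (U x t i j)) (fun x t => fst (U' x t i j)) /\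
  dtr e (fun x t => snd (U x t i j)) (fun x t => snd (U' x t i j))) -> pdt_in m1 m2 (Sq e) U U'.
Proof. intros H x t i j Hxt Hi Hj. split; apply (H i j Hi Hj); auto. Qed.

Lemma cont_split U : cont_in m1 m2 (Sq e) U -> forall i j, (i < m1)%nat -> (j < m2)%nat ->
  contr e (fun x t => fst (U x t i j)) /\ contr e (fun x t => snd (U x t i j)).
Proof.
  intros H i j Hi Hj. split; intros x t Hxt eps He;
  destruct (H x t i j Hxt Hi Hj eps He) as [d [Hd P]]; exists d; split; auto;
  intros [y s] [A [B C']]; simpl in *;
  specialize (P y s A B C').
  - eapply Rle_lt_trans; [|exact P]. apply (Cmod_fst (Cadd (U y s i j) (Copp (U x t i j)))).
  - eapply Rle_lt_trans; [|exact P]. apply (Cmod_snd (Cadd (U y s i j) (Copp (U x t i j)))).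
Qed.
Lemma cont_join U : (forall i j, (i < m1)%nat -> (j < m2)%nat ->
  contr e (fun x t => fst (U x t i j)) /\ contr e (fun x t => snd (U x t i j))) ->
  cont_in m1 m2 (Sq e) U.
Proof.
  intros H x t i j Hxt Hi Hj eps He.
  destruct (H i j Hi Hj) as [H1 H2].
  destruct (H1 x t Hxt (eps/2)) as [d1 [Hd1 P1]]; [lra|].
  destruct (H2 x t Hxt (eps/2)) as [d2 [Hd2 P2]]; [lra|].
  exists (Rmin d1 d2); split; [apply Rmin_glb_lt; auto|].
  intros y s Hys Hy Hs.
  pose proof (Rmin_l d1 d2); pose proof (Rmin_r d1 d2).
  assert (N1 : Nb2 e x t d1 (y, s)) by (split; [exact Hys|simpl; split; lra]).
  assert (N2 : Nb2 e x t d2 (y, s)) by (split; [exact Hys|simpl; split; lra]).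
  specialize (P1 _ N1). specialize (P2 _ N2).
  simpl in P1, P2.
  eapply Rle_lt_trans; [apply Cmod_le|]. simpl. unfold Rminus in P1, P2. lra.
Qed.
End Mat.

Definition Tform (G P : Mfun) : Mfun :=
  fun x t i j => Cmul (0, /2) (Cadd (G x t i j) (Copp (CRscal 2 (P x t i j)))).

Lemma Tform_fst G P x t i j : fst (Tform G P x t i j) = -/2 * snd (G x t i j) + snd (P x t i j).
Proof. unfold Tform, Cmul, Cadd, Copp, CRscal; simpl. field. Qed.
Lemma Tform_snd G P x t i j : snd (Tform G P x t i j) = /2 * fst (G x t i j) + - fst (P x t i j).
Proof. unfold Tform, Cmul, Cadd, Copp, CRscal; simpl. field. Qed.

Lemma Gd_contr e n u : Gd e n u -> contr e u.
Proof. destruct n; intros [H _]; exact H. Qed.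

Section Sol.
Variables (m1 m2 N : nat) (e : R) (F : nat -> Mfun).
Hypothesis He : 0 < e.

Definition dchoice (m : nat) (u : RF) : RF :=
  epsilon (inhabits (fun _ _ => 0)) (fun u' => dxr e u u' /\ Gd e m u').
Lemma dchoice_spec m u : Gd e (S m) u -> dxr e u (dchoice m u) /\ Gd e m (dchoice m u).
Proof.
  intros [_ H]. unfold dchoice. apply epsilon_spec. exact H.
Qed.
Definition Pder m (P : Mfun) : Mfun := fun x t i j =>
  (dchoice m (fun x t => fst (P x t i j)) x t, dchoice m (fun x t => snd (P x t i j)) x t).

Definition GdP n (P : Mfun) := forall a b, (a < m1)%nat -> (b < m2)%nat ->
  Gd e n (fun x t => fst (P x t a b)) /\ Gd e n (fun x t => snd (P x t a b)).

Definition SD k (T P : Mfun) :=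
  pdt_in m1 m2 (Sq e) (F k) T /\
  (forall x t i j, Sq e x t -> (i < m1)%nat -> (j < m2)%nat -> T x t i j = Tform (F (S (S k))) P x t i j) /\
  GdP (N - k) P.

Hypothesis HF1 : forall k, (k < N)%nat -> pdx_in m1 m2 (Sq e) (F k) (F (S k)).
Hypothesis HF2 : forall k, (k <= N)%nat -> cont_in m1 m2 (Sq e) (F k).

Lemma lin_dxr u u' w w' c : dxr e u u' -> dxr e w w' ->
  dxr e (fun x t => c * u x t + w x t) (fun x t => c * u' x t + w' x t).
Proof.
  intros Hu Hw. eapply dxr_ext; [| |exact (dxr_plus _ _ _ _ _ (dxr_mult _ _ _ _ _ (dxr_const e c) Hu) Hw)].
  - intros; reflexivity.
  - intros; simpl; ring.
Qed.
Lemma lin_contr u w c : contr e u -> contr e w -> contr e (fun x t => c * u x t + w x t).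
Proof. intros Hu Hw. apply contr_plus; auto. apply contr_mult; auto. apply contr_const. Qed.

Lemma step k T P : (k + 3 <= N)%nat -> SD k T P ->
  let P' := Pder (N - S k) P in
  let T' := Tform (F (S (S (S k)))) P' in
  SD (S k) T' P' /\ pdx_in m1 m2 (Sq e) T T' /\
  (forall a b, (a < m1)%nat -> (b < m2)%nat ->
     dxr e (fun x t => fst (P x t a b)) (fun x t => fst (P' x t a b)) /\
     dxr e (fun x t => snd (P x t a b)) (fun x t => snd (P' x t a b))).
Proof.
  intros Hk [HT [Hform HG]] P' T'.
  assert (EN : (N - k = S (N - S k))%nat) by lia.
  assert (Hsp : forall a b, (a < m1)%nat -> (b < m2)%nat ->
     (dxr e (fun x t => fst (P x t a b)) (fun x t => fst (P' x t a b)) /\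
      Gd e (N - S k) (fun x t => fst (P' x t a b))) /\
     (dxr e (fun x t => snd (P x t a b)) (fun x t => snd (P' x t a b)) /\
      Gd e (N - S k) (fun x t => snd (P' x t a b)))).
  { intros a b Ha Hb. destruct (HG a b Ha Hb) as [G1 G2]. rewrite EN in G1, G2.
    split; apply dchoice_spec; auto. }
  assert (HdT : pdx_in m1 m2 (Sq e) T T').
  { apply pdx_join. intros a b Ha Hb.
    destruct (Hsp a b Ha Hb) as [[D1 _] [D2 _]].
    destruct (pdx_split _ _ _ _ _ (HF1 (S (S k)) ltac:(lia)) a b Ha Hb) as [E1 E2].
    split.
    - eapply dxr_ext; [| |exact (lin_dxr _ _ _ _ (-/2) E2 D2)].
      + intros x t Hxt. rewrite (Hform x t a b Hxt Ha Hb), Tform_fst. reflexivity.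
      + intros x t Hxt. unfold T'. rewrite Tform_fst. reflexivity.
    - eapply dxr_ext; [| |exact (lin_dxr _ _ _ _ (/2) E1 (dxr_opp _ _ _ D1))].
      + intros x t Hxt. rewrite (Hform x t a b Hxt Ha Hb), Tform_snd. reflexivity.
      + intros x t Hxt. unfold T'. rewrite Tform_snd. reflexivity. }
  assert (HcT : forall a b, (a < m1)%nat -> (b < m2)%nat ->
     contr e (fun x t => fst (T' x t a b)) /\ contr e (fun x t => snd (T' x t a b))).
  { intros a b Ha Hb. destruct (Hsp a b Ha Hb) as [[_ G1] [_ G2]].
    destruct (cont_split _ _ _ _ (HF2 (S (S (S k))) ltac:(lia)) a b Ha Hb) as [C1 C2].
    split.
    - eapply contr_ext; [|exact (lin_contr _ _ (-/2) C2 (Gd_contr _ _ _ G2))].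
      intros x t _. unfold T'. rewrite Tform_fst. reflexivity.
    - eapply contr_ext; [|exact (lin_contr _ _ (/2) C1 (contr_opp _ _ (Gd_contr _ _ _ G1)))].
      intros x t _. unfold T'. rewrite Tform_snd. reflexivity. }
  split; [split; [|split]|split].
  - apply pdt_join. intros a b Ha Hb.
    destruct (pdx_split _ _ _ _ _ (HF1 k ltac:(lia)) a b Ha Hb) as [U1 U2].
    destruct (pdt_split _ _ _ _ _ HT a b Ha Hb) as [T1 T2].
    destruct (pdx_split _ _ _ _ _ HdT a b Ha Hb) as [Y1 Y2].
    destruct (HcT a b Ha Hb) as [C1 C2].
    split; eapply schwarz; eauto.
  - intros; reflexivity.
  - intros a b Ha Hb. destruct (Hsp a b Ha Hb) as [[_ G1] [_ G2]]. split; auto.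
  - exact HdT.
  - intros a b Ha Hb. destruct (Hsp a b Ha Hb) as [[D1 _] [D2 _]]. split; auto.
Qed.

End Sol.

Lemma pair_eq (z w : Defs.C) : fst z = fst w -> snd z = snd w -> z = w.
Proof. destruct z, w; simpl; intros -> ->; auto. Qed.

Lemma Csum_ext n f g : (forall q, (q < n)%nat -> f q = g q) -> Csum n f = Csum n g.
Proof. induction n; intros H; simpl; auto. rewrite IHn, H; auto. Qed.

Lemma cubic_ext m1 m2 A B : Meq m1 m2 A B -> forall i j, (i < m1)%nat -> (j < m2)%nat ->
  cubic m1 m2 A i j = cubic m1 m2 B i j.
Proof.
  intros H i j Hi Hj. unfold cubic. apply Csum_ext. intros q Hq.
  rewrite (H q j Hq Hj). f_equal. apply Csum_ext. intros p Hp. rewrite H, (H q p); auto.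
Qed.

Lemma half_eq (z X : Defs.C) : CRscal 2 z = Cmul Ci X -> z = Cmul (0, /2) X.
Proof.
  destruct z as [z1 z2], X as [X1 X2]. unfold CRscal, Cmul, Ci; simpl. intros H.
  inversion H. apply pair_eq; simpl; lra.
Qed.

Lemma below_a_le a t e : t <= e -> below_a a e -> below_a a t.
Proof. destruct a; simpl; auto. lra. Qed.
Lemma Sq_Dom a e x t : below_a a e -> Sq e x t -> Dom a x t.
Proof. intros Hb [Hx Ht]. split; [lra|split; [lra|]]. eapply below_a_le; [|exact Hb]. lra. Qed.

Section Base.
Variables (m1 m2 : nat) (e : R) (a : option R).
Hypothesis He : 0 < e.
Hypothesis Hb : below_a a e.

Lemma dxr_from_Dom U U' W : pdx_in m1 m2 (Dom a) U U' ->
  (forall x t i j, Sq e x t -> (i < m1)%nat -> (j < m2)%nat -> W x t i j = U x t i j) ->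
  forall i j, (i < m1)%nat -> (j < m2)%nat ->
  dxr e (fun x t => fst (W x t i j)) (fun x t => fst (U' x t i j)) /\
  dxr e (fun x t => snd (W x t i j)) (fun x t => snd (U' x t i j)).
Proof.
  intros HU HW i j Hi Hj. split; intros x t Hxt;
  (eapply deriv_ext; [| exact Hxt |]);
  [| eapply deriv_mono; [| apply (HU x t i j (Sq_Dom _ _ _ _ Hb Hxt) Hi Hj)] |
   | eapply deriv_mono; [| apply (HU x t i j (Sq_Dom _ _ _ _ Hb Hxt) Hi Hj)] ];
  try (intros y Hy; apply (Sq_Dom _ _ _ _ Hb Hy));
  intros y Hy; simpl; rewrite (HW y t i j Hy Hi Hj); reflexivity.
Qed.

Lemma dtr_from_Dom U U' W : pdt_in m1 m2 (Dom a) U U' ->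
  (forall x t i j, Sq e x t -> (i < m1)%nat -> (j < m2)%nat -> W x t i j = U x t i j) ->
  pdt_in m1 m2 (Sq e) W U'.
Proof.
  intros HU HW x t i j Hxt Hi Hj. split;
  (eapply deriv_ext; [| exact Hxt |]);
  [| eapply deriv_mono; [| apply (HU x t i j (Sq_Dom _ _ _ _ Hb Hxt) Hi Hj)] |
   | eapply deriv_mono; [| apply (HU x t i j (Sq_Dom _ _ _ _ Hb Hxt) Hi Hj)] ];
  try (intros y Hy; apply (Sq_Dom _ _ _ _ Hb Hy));
  intros y Hy; simpl; rewrite (HW x y i j Hy Hi Hj); reflexivity.
Qed.

Variables (N : nat) (F : nat -> Mfun) (v : Mfun).
Hypothesis HF0 : forall x t, Sq e x t -> Meq m1 m2 (F 0%nat x t) (v x t).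
Hypothesis HF1 : forall k, (k < N)%nat -> pdx_in m1 m2 (Sq e) (F k) (F (S k)).
Hypothesis HF2 : forall k, (k <= N)%nat -> cont_in m1 m2 (Sq e) (F k).
Hypothesis HN : (2 <= N)%nat.

Lemma F_eq_of U U' k : (k < N)%nat ->
  (forall x t i j, Sq e x t -> (i < m1)%nat -> (j < m2)%nat -> F k x t i j = U x t i j) ->
  pdx_in m1 m2 (Dom a) U U' ->
  forall x t i j, Sq e x t -> (i < m1)%nat -> (j < m2)%nat -> F (S k) x t i j = U' x t i j.
Proof.
  intros Hk E HU x t i j Hxt Hi Hj.
  destruct (dxr_from_Dom U U' (F k) HU E i j Hi Hj) as [A1 A2].
  destruct (pdx_split _ _ _ _ _ (HF1 k Hk) i j Hi Hj) as [B1 B2].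
  apply pair_eq; [apply (dxr_uniq e He _ _ _ B1 A1)|apply (dxr_uniq e He _ _ _ B2 A2)]; auto.
Qed.

Lemma base vx vt vxx : pdx_in m1 m2 (Dom a) v vx -> pdt_in m1 m2 (Dom a) v vt ->
  pdx_in m1 m2 (Dom a) vx vxx ->
  (forall x t i j, Dom a x t -> (i < m1)%nat -> (j < m2)%nat ->
      CRscal 2 (vt x t i j) =
      Cmul Ci (Cadd (vxx x t i j) (Copp (CRscal 2 (cubic m1 m2 (v x t) i j))))) ->
  SD m1 m2 N e F 0 vt (fun x t => cubic m1 m2 (F 0%nat x t)).
Proof.
  intros Hvx Hvt Hvxx Heq.
  assert (E0 : forall x t i j, Sq e x t -> (i < m1)%nat -> (j < m2)%nat -> F 0%nat x t i j = v x t i j)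
    by (intros; apply HF0; auto).
  assert (E1 := F_eq_of v vx 0 ltac:(lia) E0 Hvx).
  assert (E2 := F_eq_of vx vxx 1 ltac:(lia) E1 Hvxx).
  split; [|split].
  - apply (dtr_from_Dom v); auto.
  - intros x t i j Hxt Hi Hj. unfold Tform.
    rewrite (half_eq _ _ (Heq x t i j (Sq_Dom _ _ _ _ Hb Hxt) Hi Hj)).
    rewrite (E2 x t i j Hxt Hi Hj), (cubic_ext m1 m2 (v x t) (F 0%nat x t)); auto.
    intros p q Hp Hq. symmetry. apply HF0; auto.
  - intros i j Hi Hj.
    refine (CRel_cubic (fun u _ => Gd e (N - 0) u) _ _ _ _ m1 m2 (F 0%nat) (F 0%nat) _ i j Hi Hj).
    + intros; apply Gd_plus; auto.
    + intros; apply Gd_mult; auto.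
    + intros; apply Gd_opp; auto.
    + intros; apply Gd_const.
    + intros p q Hp Hq.
      destruct (pdx_split _ _ _ _ _ (HF1 0 ltac:(lia)) p q Hp Hq) as [_ _].
      split.
      * apply (fam_Gd e N (fun k x t => fst (F k x t p q))); [|lia].
        split; intros k Hk; [apply (pdx_split _ _ _ _ _ (HF1 k Hk)); auto|
                              apply (cont_split _ _ _ _ (HF2 k Hk)); auto].
      * apply (fam_Gd e N (fun k x t => snd (F k x t p q))); [|lia].
        split; intros k Hk; [apply (pdx_split _ _ _ _ _ (HF1 k Hk)); auto|
                              apply (cont_split _ _ _ _ (HF2 k Hk)); auto].
Qed.
End Base.

Section AG.
Variables (m1 m2 N : nat) (e : R) (F G : nat -> Mfun).
Hypothesis He : 0 < e.
Hypothesis HF1 : forall k, (k < N)%nat -> pdx_in m1 m2 (Sq e) (F k) (F (S k)).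
Hypothesis HF2 : forall k, (k <= N)%nat -> cont_in m1 m2 (Sq e) (F k).
Hypothesis HG1 : forall k, (k < N)%nat -> pdx_in m1 m2 (Sq e) (G k) (G (S k)).
Hypothesis HG2 : forall k, (k <= N)%nat -> cont_in m1 m2 (Sq e) (G k).

Lemma famc (H : nat -> Mfun) :
  (forall k, (k < N)%nat -> pdx_in m1 m2 (Sq e) (H k) (H (S k))) ->
  (forall k, (k <= N)%nat -> cont_in m1 m2 (Sq e) (H k)) ->
  forall p q, (p < m1)%nat -> (q < m2)%nat ->
  realfam e N (fun k x t => fst (H k x t p q)) /\ realfam e N (fun k x t => snd (H k x t p q)).
Proof.
  intros H1 H2 p q Hp Hq. split; split; intros k Hk;
  first [apply (pdx_split _ _ _ _ _ (H1 k Hk)); auto | apply (cont_split _ _ _ _ (H2 k Hk)); auto].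
Qed.

Definition AGP k (Pv Pw : Mfun) := forall m, (k + m <= N)%nat ->
  (forall j t, (j <= k + m)%nat -> 0 <= t <= e -> Meq m1 m2 (F j 0 t) (G j 0 t)) ->
  forall a b, (a < m1)%nat -> (b < m2)%nat ->
  Ag e m (fun x t => fst (Pv x t a b)) (fun x t => fst (Pw x t a b)) /\
  Ag e m (fun x t => snd (Pv x t a b)) (fun x t => snd (Pw x t a b)).

Lemma AG_base : AGP 0 (fun x t => cubic m1 m2 (F 0%nat x t)) (fun x t => cubic m1 m2 (G 0%nat x t)).
Proof.
  intros m Hm HA a b Ha Hb.
  refine (CRel_cubic (Ag e m) _ _ _ _ m1 m2 (F 0%nat) (G 0%nat) _ a b Ha Hb).
  - intros; apply Ag_plus; auto.
  - intros; apply Ag_mult; auto.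
  - intros; apply Ag_opp; auto.
  - intros; apply Ag_const.
  - intros p q Hp Hq.
    destruct (famc F HF1 HF2 p q Hp Hq) as [R1 R2].
    destruct (famc G HG1 HG2 p q Hp Hq) as [S1 S2].
    split.
    + refine (fam_Ag e N _ _ m R1 S1 ltac:(lia) _ m 0 ltac:(lia)).
      intros j t Hj Ht. simpl. rewrite (HA j t ltac:(lia) Ht p q Hp Hq). reflexivity.
    + refine (fam_Ag e N _ _ m R2 S2 ltac:(lia) _ m 0 ltac:(lia)).
      intros j t Hj Ht. simpl. rewrite (HA j t ltac:(lia) Ht p q Hp Hq). reflexivity.
Qed.

Lemma AG_step k Pv Pw Pv' Pw' : AGP k Pv Pw ->
  (forall a b, (a < m1)%nat -> (b < m2)%nat ->
     dxr e (fun x t => fst (Pv x t a b)) (fun x t => fst (Pv' x t a b)) /\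
     dxr e (fun x t => snd (Pv x t a b)) (fun x t => snd (Pv' x t a b))) ->
  (forall a b, (a < m1)%nat -> (b < m2)%nat ->
     dxr e (fun x t => fst (Pw x t a b)) (fun x t => fst (Pw' x t a b)) /\
     dxr e (fun x t => snd (Pw x t a b)) (fun x t => snd (Pw' x t a b))) ->
  AGP (S k) Pv' Pw'.
Proof.
  intros HA Dv Dw m Hm Hagr a b Ha Hb.
  destruct (HA (S m) ltac:(lia) ltac:(intros j t Hj Ht; apply Hagr; auto; lia) a b Ha Hb)
    as [[_ [u1 [w1 [U1 [W1 A1]]]]] [_ [u2 [w2 [U2 [W2 A2]]]]]].
  destruct (Dv a b Ha Hb) as [V1 V2]. destruct (Dw a b Ha Hb) as [X1 X2].
  split; [eapply (Ag_ext e He); [| |exact A1]|eapply (Ag_ext e He); [| |exact A2]]; intros x t Hxt.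
  - exact (dxr_uniq e He _ _ _ U1 V1 x t Hxt).
  - exact (dxr_uniq e He _ _ _ W1 X1 x t Hxt).
  - exact (dxr_uniq e He _ _ _ U2 V2 x t Hxt).
  - exact (dxr_uniq e He _ _ _ W2 X2 x t Hxt).
Qed.

Lemma agree_all K : (K <= N)%nat ->
  (forall k, (k <= K)%nat -> exists Tv Pv Tw Pw,
     SD m1 m2 N e F k Tv Pv /\ SD m1 m2 N e G k Tw Pw /\ AGP k Pv Pw) ->
  (forall t, 0 <= t <= e -> Meq m1 m2 (F 0%nat 0 t) (G 0%nat 0 t)) ->
  (forall t, 0 <= t <= e -> Meq m1 m2 (F 1%nat 0 t) (G 1%nat 0 t)) ->
  forall k t, (k <= K + 2)%nat -> 0 <= t <= e -> Meq m1 m2 (F k 0 t) (G k 0 t).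
Proof.
  intros HK Hdata A0 A1.
  assert (Main : forall n k t, (k <= n)%nat -> (k <= K + 2)%nat -> 0 <= t <= e ->
                 Meq m1 m2 (F k 0 t) (G k 0 t)).
  { induction n; intros k t Hkn HkK Ht.
    - replace k with 0%nat by lia. auto.
    - destruct (Nat.eq_dec k (S n)) as [->|Hne]; [|apply IHn; auto; lia].
      destruct n as [|k0]; [apply A1; auto|].
      destruct (Hdata k0 ltac:(lia)) as [Tv [Pv [Tw [Pw [[Tv1 [Tv2 _]] [[Tw1 [Tw2 _]] HAG]]]]]].
      intros p q Hp Hq.
      assert (S0 : Sq e 0 t) by (split; lra).
      assert (ET : Tv 0 t p q = Tw 0 t p q).
      { destruct (Tv1 0 t p q S0 Hp Hq) as [D1 D2].
        destruct (Tw1 0 t p q S0 Hp Hq) as [D3 D4].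
        assert (Pts : forall d, 0 < d -> exists h, Nb1 (fun s => Sq e 0 s) t d h).
        { intros d Hd. destruct (interval_pts e t He Ht d Hd) as [h [X [Y Z]]].
          exists h. split; [auto|split; [auto|split; [lra|auto]]]. }
        apply pair_eq.
        - eapply deriv_uniq; [exact Pts|exact D1|].
          eapply deriv_ext; [|exact S0|exact D3]. intros s [_ Hs]. simpl.
          rewrite (IHn k0 s ltac:(lia) ltac:(lia) Hs p q Hp Hq). reflexivity.
        - eapply deriv_uniq; [exact Pts|exact D2|].
          eapply deriv_ext; [|exact S0|exact D4]. intros s [_ Hs]. simpl.
          rewrite (IHn k0 s ltac:(lia) ltac:(lia) Hs p q Hp Hq). reflexivity. }
      destruct (HAG 0%nat ltac:(lia) ltac:(intros j s Hj Hs; apply IHn; auto; lia) p q Hp Hq)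
        as [[P1 _] [P2 _]].
      specialize (P1 t Ht). specialize (P2 t Ht). simpl in P1, P2.
      pose proof (Tv2 0 t p q S0 Hp Hq) as V. pose proof (Tw2 0 t p q S0 Hp Hq) as W.
      assert (V1 := f_equal fst V). assert (V2 := f_equal snd V).
      assert (W1 := f_equal fst W). assert (W2 := f_equal snd W).
      rewrite Tform_fst in V1, W1. rewrite Tform_snd in V2, W2.
      rewrite ET in V1, V2.
      apply pair_eq; lra. }
  intros k t Hk Ht. apply (Main k); auto.
Qed.
End AG.

Lemma xfam_mono m1 m2 v n F e e' : e <= e' ->
  xderiv_family m1 m2 (Sq e') v n F -> xderiv_family m1 m2 (Sq e) v n F.
Proof.
  intros Hee [H0 [H1 H2]].
  assert (Sub : forall x t, Sq e x t -> Sq e' x t) by (intros x t [A B]; split; lra).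
  split; [|split].
  - intros x t Hxt. apply H0; auto.
  - intros k Hk x t i j Hxt Hi Hj. destruct (H1 k Hk x t i j (Sub _ _ Hxt) Hi Hj) as [A B].
    split; [eapply deriv_mono; [|exact A]|eapply deriv_mono; [|exact B]]; simpl; intros y Hy; apply Sub; auto.
  - intros k Hk x t i j Hxt Hi Hj eps Heps.
    destruct (H2 k Hk x t i j (Sub _ _ Hxt) Hi Hj eps Heps) as [d [Hd P]].
    exists d; split; [auto|]. intros y s Hys. apply P. apply Sub; auto.
Qed.

Lemma xfam_le m1 m2 S v n n' F : (n' <= n)%nat ->
  xderiv_family m1 m2 S v n F -> xderiv_family m1 m2 S v n' F.
Proof. intros Hn [H0 [H1 H2]]. split; [auto|split; intros; [apply H1|apply H2]; lia]. Qed.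

Lemma part1 (m1 m2 : nat) (a : option R) (M : nat -> nat -> nat -> R) (v w : Mfun) :
    Cq m1 m2 a M v -> nls m1 m2 a v ->
    Cq m1 m2 a M w -> nls m1 m2 a w ->
    (forall t, 0 <= t -> below_a a t -> Meq m1 m2 (v 0 t) (w 0 t)) ->
    (exists vx wx, pdx_in m1 m2 (Dom a) v vx /\ pdx_in m1 m2 (Dom a) w wx /\
       forall t, 0 <= t -> below_a a t -> Meq m1 m2 (vx 0 t) (wx 0 t)) ->
    (forall r : nat, exists eps, 0 < eps /\ below_a a eps /\
       exists F G,
         xderiv_family m1 m2 (Sq eps) v (S r) F /\
         xderiv_family m1 m2 (Sq eps) w (S r) G /\
         mixed_commute m1 m2 (Sq eps) F r /\
         mixed_commute m1 m2 (Sq eps) G r /\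
         (forall k t, (k <= r)%nat -> 0 <= t <= eps ->
            Meq m1 m2 (F k 0 t) (G k 0 t))).
Proof.
  intros Hcv Hnv Hcw Hnw Hbd Hbd1 r.
  set (N := (r + 4)%nat).
  destruct Hcv as [_ [_ [_ [_ Hfv]]]]. destruct (Hfv N) as [ev [Hev [Hbv [Fv HFv]]]].
  destruct Hcw as [_ [_ [_ [_ Hfw]]]]. destruct (Hfw N) as [ew [Hew [Hbw [Gw HGw]]]].
  set (e := Rmin ev ew).
  assert (He : 0 < e) by (apply Rmin_glb_lt; auto).
  assert (Hb : below_a a e) by (eapply below_a_le; [apply Rmin_l|exact Hbv]).
  apply (xfam_mono _ _ _ _ _ e) in HFv; [|apply Rmin_l].
  apply (xfam_mono _ _ _ _ _ e) in HGw; [|apply Rmin_r].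
  pose proof HFv as [F0 [F1 F2]]. pose proof HGw as [G0 [G1 G2]].
  destruct Hnv as [vx [vt [vxx [Hvx [Hvt [Hvxx Heqv]]]]]].
  destruct Hnw as [wx [wt [wxx [Hwx [Hwt [Hwxx Heqw]]]]]].
  assert (Hdata : forall k, (k <= r + 1)%nat -> exists Tv Pv Tw Pw,
     SD m1 m2 N e Fv k Tv Pv /\ SD m1 m2 N e Gw k Tw Pw /\ AGP m1 m2 N e Fv Gw k Pv Pw).
  { induction k; intros Hk.
    - exists vt, (fun x t => cubic m1 m2 (Fv 0%nat x t)), wt, (fun x t => cubic m1 m2 (Gw 0%nat x t)).
      split; [|split].
      + apply (base m1 m2 e a He Hb N Fv v F0 F1 F2 ltac:(unfold N; lia) vx vt vxx); auto.
      + apply (base m1 m2 e a He Hb N Gw w G0 G1 G2 ltac:(unfold N; lia) wx wt wxx); auto.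
      + apply AG_base; auto.
    - destruct (IHk ltac:(lia)) as [Tv [Pv [Tw [Pw [SDv [SDw HAG]]]]]].
      pose proof (step m1 m2 N e Fv He F1 F2 k Tv Pv ltac:(unfold N; lia) SDv) as Sv.
      pose proof (step m1 m2 N e Gw He G1 G2 k Tw Pw ltac:(unfold N; lia) SDw) as Sw.
      cbv zeta in Sv, Sw.
      destruct Sv as [SDv' [_ Dv]]. destruct Sw as [SDw' [_ Dw]].
      do 4 eexists. split; [exact SDv'|split; [exact SDw'|]].
      eapply AG_step; eauto. }
  exists e. split; [auto|split; [auto|]]. exists Fv, Gw.
  split; [apply (xfam_le _ _ _ _ N); [unfold N; lia|auto]|].
  split; [apply (xfam_le _ _ _ _ N); [unfold N; lia|auto]|].
  split; [|split].
  - intros k Hk. destruct (Hdata k ltac:(lia)) as [Tv [Pv [Tw [Pw [SDv [SDw HAG]]]]]].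
    pose proof (step m1 m2 N e Fv He F1 F2 k Tv Pv ltac:(unfold N; lia) SDv) as Sv.
    cbv zeta in Sv. destruct Sv as [[P1 _] [P2 _]].
    exists Tv; eexists; split; [apply SDv|split; [exact P2|exact P1]].
  - intros k Hk. destruct (Hdata k ltac:(lia)) as [Tv [Pv [Tw [Pw [SDv [SDw HAG]]]]]].
    pose proof (step m1 m2 N e Gw He G1 G2 k Tw Pw ltac:(unfold N; lia) SDw) as Sw.
    cbv zeta in Sw. destruct Sw as [[P1 _] [P2 _]].
    exists Tw; eexists; split; [apply SDw|split; [exact P2|exact P1]].
  - intros k t Hk Ht.
    assert (Hbt : forall t, 0 <= t <= e -> below_a a t) by
      (intros s Hs; eapply below_a_le; [|exact Hb]; lra).
    apply (agree_all m1 m2 N e Fv Gw He r ltac:(unfold N; lia)); auto; [intros k0 Hk0; apply Hdata; lia| | |lia].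
    + intros s Hs p q Hp Hq. rewrite (F0 0 s ltac:(split; lra) p q Hp Hq),
        (G0 0 s ltac:(split; lra) p q Hp Hq). apply Hbd; auto; lra.
    + destruct Hbd1 as [vx' [wx' [Hvx' [Hwx' Hb1]]]].
      intros s Hs p q Hp Hq.
      rewrite (F_eq_of m1 m2 e a He Hb N Fv F1 v vx' 0 ltac:(unfold N; lia)
                 ltac:(intros; apply F0; auto) Hvx' 0 s p q ltac:(split; lra) Hp Hq).
      rewrite (F_eq_of m1 m2 e a He Hb N Gw G1 w wx' 0 ltac:(unfold N; lia)
                 ltac:(intros; apply G0; auto) Hwx' 0 s p q ltac:(split; lra) Hp Hq).
      apply Hb1; auto; lra.
Qed.

Lemma Cmod_sub_le (z w : Defs.C) : Cmod (Cadd z (Copp w)) <= Cmod z + Cmod w.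
Proof.
  pose proof (Coquelicot.Complex.Cmod_triangle z (Coquelicot.Complex.Copp w)) as H.
  rewrite Coquelicot.Complex.Cmod_opp in H. exact H.
Qed.

Lemma pow_sum_le (A B : R) n : 0 <= A -> 0 <= B -> A ^ S n + B ^ S n <= (A + B) ^ S n.
Proof.
  intros HA HB. induction n.
  - simpl. lra.
  - change ((A + B) ^ S (S n)) with ((A + B) * (A + B) ^ S n).
    change (A ^ S (S n)) with (A * A ^ S n). change (B ^ S (S n)) with (B * B ^ S n).
    pose proof (pow_le A (S n) HA). pose proof (pow_le B (S n) HB). nra.
Qed.

Lemma class_match m1 m2 eps v n F (Phi : nat -> R -> Defs.C) i j : 0 < eps ->
  xderiv_family m1 m2 (Sq eps) v n F -> (i < m1)%nat -> (j < m2)%nat ->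
  deriv_family1 (fun x => v x 0 i j) Phi ->
  forall k, (k <= n)%nat -> forall x, 0 <= x <= eps -> Phi k x = F k x 0 i j.
Proof.
  intros He [F0 [F1 F2]] Hi Hj [P0 P1] k. induction k; intros Hk x Hx.
  - rewrite P0 by lra. symmetry. apply F0; auto. split; lra.
  - assert (Sx : Sq eps x 0) by (split; lra).
    destruct (F1 k ltac:(lia) x 0 i j Sx Hi Hj) as [D1 D2].
    destruct (P1 k x ltac:(lra)) as [E1 E2].
    assert (Pts : forall d, 0 < d -> exists h, Nb1 (fun y => Sq eps y 0) x d h).
    { intros d Hd. destruct (interval_pts eps x He Hx d Hd) as [h [X [Y Z]]].
      exists h. split; [auto|split; [auto|split; [auto|lra]]]. }
    apply pair_eq.
    + eapply deriv_uniq; [exact Pts| |exact D1].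
      eapply deriv_ext; [|exact Sx|eapply deriv_mono; [|exact E1]; intros y [Hy _]; unfold Defs.nonneg; lra].
      intros y [Hy _]. simpl. rewrite IHk; auto; lia.
    + eapply deriv_uniq; [exact Pts| |exact D2].
      eapply deriv_ext; [|exact Sx|eapply deriv_mono; [|exact E2]; intros y [Hy _]; unfold Defs.nonneg; lra].
      intros y [Hy _]. simpl. rewrite IHk; auto; lia.
Qed.

Theorem mainTheorem5 :
  forall (m1 m2 : nat) (a : option R) (M : nat -> nat -> nat -> R) (v w : Mfun),
    a_pos a ->
    (forall i j k, (i < m1)%nat -> (j < m2)%nat -> 0 < M i j k) ->
    Cq m1 m2 a M v -> nls m1 m2 a v ->
    Cq m1 m2 a M w -> nls m1 m2 a w ->
    (forall t, 0 <= t -> below_a a t -> Meq m1 m2 (v 0 t) (w 0 t)) ->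
    (exists vx wx, pdx_in m1 m2 (Dom a) v vx /\ pdx_in m1 m2 (Dom a) w wx /\
       forall t, 0 <= t -> below_a a t -> Meq m1 m2 (vx 0 t) (wx 0 t)) ->
    (forall r : nat, exists eps, 0 < eps /\ below_a a eps /\
       exists F G,
         xderiv_family m1 m2 (Sq eps) v (S r) F /\
         xderiv_family m1 m2 (Sq eps) w (S r) G /\
         mixed_commute m1 m2 (Sq eps) F r /\
         mixed_commute m1 m2 (Sq eps) G r /\
         (forall k t, (k <= r)%nat -> 0 <= t <= eps ->
            Meq m1 m2 (F k 0 t) (G k 0 t))) /\
    (forall x, 0 <= x -> Meq m1 m2 (v x 0) (w x 0)).
Proof.
  intros m1 m2 a M v w Ha HM Hcv Hnv Hcw Hnw Hbd Hbd1.
  pose proof (part1 m1 m2 a M v w Hcv Hnv Hcw Hnw Hbd Hbd1) as P1.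
  split; [exact P1|].
  intros x Hx i j Hi Hj.
  destruct Hcv as [_ [_ [_ [Hqv _]]]]. destruct Hcw as [_ [_ [_ [Hqw _]]]].
  destruct (Hqv i j Hi Hj) as [[Phi [HPhi [A [HA HAb]]]] Hqa].
  destruct (Hqw i j Hi Hj) as [[Psi [HPsi [B [HB HBb]]]] _].
  set (f := fun x => Cadd (v x 0 i j) (Copp (w x 0 i j))).
  set (Dl := fun k x => Cadd (Phi k x) (Copp (Psi k x))).
  assert (Hdf : deriv_family1 f Dl).
  { split.
    - intros y Hy. unfold Dl, f. rewrite (proj1 HPhi y Hy), (proj1 HPsi y Hy). reflexivity.
    - intros k y Hy. destruct (proj2 HPhi k y Hy) as [a1 a2].
      destruct (proj2 HPsi k y Hy) as [b1 b2].
      split.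
      + exact (deriv_plus _ _ _ _ _ _ a1 (deriv_opp _ _ _ _ b1)).
      + exact (deriv_plus _ _ _ _ _ _ a2 (deriv_opp _ _ _ _ b2)). }
  assert (Hcl : in_classC (M i j) f).
  { exists Dl. split; [exact Hdf|]. exists (A + B). split; [lra|].
    intros k y Hy. unfold Dl. eapply Rle_trans; [apply Cmod_sub_le|].
    pose proof (HAb k y Hy). pose proof (HBb k y Hy).
    pose proof (pow_sum_le A B k HA HB). pose proof (HM i j k Hi Hj). nra. }
  assert (H0 : forall k, Dl k 0 = C0).
  { intros k. destruct (P1 k) as [eps [Heps [_ [F [G [HF [HG [_ [_ Hag]]]]]]]]].
    unfold Dl.
    rewrite (class_match m1 m2 eps v (S k) F Phi i j Heps HF Hi Hj HPhi k ltac:(lia) 0 ltac:(lra)).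
    rewrite (class_match m1 m2 eps w (S k) G Psi i j Heps HG Hi Hj HPsi k ltac:(lia) 0 ltac:(lra)).
    rewrite (Hag k 0 ltac:(lia) ltac:(lra) i j Hi Hj).
    apply pair_eq; simpl; ring. }
  pose proof (Hqa f Hcl Dl Hdf 0 (Rle_refl 0) H0 x Hx) as Hf. unfold f in Hf.
  apply pair_eq.
  - pose proof (f_equal fst Hf) as E. simpl in E. lra.
  - pose proof (f_equal snd Hf) as E. simpl in E. lra.
Qed.
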